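(* Let $M$ be a free $\mathbb{T}$-module with a finite $\mathbb{T}$-basis, $V$ its associated complex vector space, $(\cdot,\cdot)$ a bicomplex scalar product on $M$ which is hyperbolic positive and closed on $V$, $\|\cdot\|$ the norm on $M$ defined below, and $d(\widehat X,\widehat Y):=\|\widehat X-\widehat Y\|$. Then for all $\widehat X,\widehat Y\in M$: 1. $\|\widehat X\|\ge 0$; 2. $\|\widehat X\|=0\iff\widehat X=0$; 3. $\|\alpha\widehat X\|=|\alpha|\,\|\widehat X\|$ for all $\alpha\in\mathbb{C}(\mathbf{i_1})$ or $\alpha\in\mathbb{C}(\mathbf{i_2})$; 4. $\|\alpha\widehat X\|\le\sqrt2\,|\alpha|_{\mathbf 3}\,\|\widehat X\|$ for all $\alpha\in\mathbb{T}$; 5. $\|\widehat X+\widehat Y\|\le\|\widehat X\|+\|\widehat Y\|$; 6. $(M,d)$ is a metric space.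
   Context: Bicomplex numbers: $\mathbb{T}=\{z_1+z_2\mathbf{i_2}: z_1,z_2\in\mathbb{C}(\mathbf{i_1})\}$, $\mathbb{C}(\mathbf{i_k})=\{x+y\mathbf{i_k}: x,y\in\mathbb{R}\}$ ($k=1,2$), $\mathbf{i_1}^2=\mathbf{i_2}^2=-1$, $\mathbf{i_1}\mathbf{i_2}=\mathbf{i_2}\mathbf{i_1}=\mathbf{j}$, $\mathbf{j}^2=1$ (commutative). Hyperbolic numbers $\mathbb{D}=\{x+y\mathbf{j}:x,y\in\mathbb{R}\}$. Idempotents $\mathbf{e_1}=(1+\mathbf{j})/2$, $\mathbf{e_2}=(1-\mathbf{j})/2$. For $w=z_1+z_2\mathbf{i_2}$, $|w|_{\mathbf 3}=|w|=\sqrt{|z_1|^2+|z_2|^2}$ (Euclidean norm in $\mathbb{R}^4$); for $\alpha=x+y\mathbf{i_k}$, $|\alpha|=\sqrt{x^2+y^2}$. Conjugation: $(z_1+z_2\mathbf{i_2})^{\dagger_3}=\overline{z_1}-\overline{z_2}\mathbf{i_2}$. $\mathbb{D}^+=\{a\mathbf{e_1}+b\mathbf{e_2}: a,b\ge 0\}$, and $(a\mathbf{e_1}+b\mathbf{e_2})^{1/2}=\sqrt a\,\mathbf{e_1}+\sqrt b\,\mathbf{e_2}$. $M$ has $\mathbb{T}$-basis $\{\widehat m_1,\dots,\widehat m_n\}$, $V=\{\sum x_l\widehat m_l: x_l\in\mathbb{C}(\mathbf{i_1})\}$; for $\widehat X=\sum x_l\widehat m_l$ with $x_l=x_{1l}\mathbf{e_1}+x_{2l}\mathbf{e_2}$,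 $x_{kl}\in\mathbb{C}(\mathbf{i_1})$, put $\widehat X_{\mathbf{e_k}}=\sum_l x_{kl}\widehat m_l\in V$. A bicomplex scalar product is a map $(\cdot,\cdot):M\times M\to\mathbb{T}$ with: $(\widehat X,\widehat Y_1+\widehat Y_2)=(\widehat X,\widehat Y_1)+(\widehat X,\widehat Y_2)$; $(\widehat X,\alpha\widehat Y)=\alpha(\widehat X,\widehat Y)$ for $\alpha\in\mathbb{T}$; $(\widehat X,\widehat Y)=(\widehat Y,\widehat X)^{\dagger_3}$; $(\widehat X,\widehat X)=0\iff\widehat X=0$. Hyperbolic positive: $(\widehat X,\widehat X)\in\mathbb{D}^+$ for all $\widehat X$. Closed on $V$: $(\widehat X,\widehat Y)\in\mathbb{C}(\mathbf{i_1})$ for $\widehat X,\widehat Y\in V$. For $\widehat Z\in V$, $\|\widehat Z\|=(\widehat Z,\widehat Z)^{1/2}$. For $\widehat X\in M$, $\|\widehat X\|:=\big|(\widehat X,\widehat X)^{1/2}\big|=\big|\mathbf{e_1}\|\widehat X_{\mathbf{e_1}}\|+\mathbf{e_2}\|\widehat X_{\mathbf{e_2}}\|\big|=\big((\|\widehat X_{\mathbf{e_1}}\|^2+\|\widehat X_{\mathbf{e_2}}\|^2)/2\big)^{1/2}$. *)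

(* Defs.v *)
From HB Require Import structures.
From mathcomp Require Import all_boot all_order all_algebra.
From mathcomp Require Import complex.
Set Implicit Arguments. Unset Strict Implicit. Unset Printing Implicit Defensive.
Import Order.TTheory GRing.Theory Num.Theory.
Local Open Scope ring_scope.

(* Bicomplex numbers T = C(i1)[i2]: w = z1 + z2 i2 is represented as
   Complex z1 z2 : R[i][i], with z1 z2 : R[i] = C(i1).  The ring structure
   of R[i][i] is exactly the bicomplex multiplication (i1 i2 = i2 i1,
   i1^2 = i2^2 = -1). *)
Definition bicomplex (R : rcfType) := complex (complex R).

Section Bicomplex.
Variable R : rcfType.
Local Notation C := (complex R).
Local Notation T := (bicomplex R).

Definition inC1 (z : C) : T := Complex z 0.
Definition realT (a : R) : T := inC1 (Complex a 0).
Definition bi1 : T := Complex (Complex 0 1) 0.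
Definition bi2 : T := Complex 0 1.
Definition bj : T := bi1 * bi2.
Definition inCi1 (w : T) : Prop := exists x y : R, w = realT x + realT y * bi1.
Definition inCi2 (w : T) : Prop := exists x y : R, w = realT x + realT y * bi2.
Definition be1 : T := realT (2%:R)^-1 * (1 + bj).
Definition be2 : T := realT (2%:R)^-1 * (1 - bj).
Definition inDplus (w : T) : Prop :=
  exists a b : R, 0 <= a /\ 0 <= b /\ w = realT a * be1 + realT b * be2.
Definition normT (w : T) : R :=
  let: Complex z1 z2 := w in
  let: Complex a b := z1 in let: Complex c d := z2 in
  Num.sqrt (a ^+ 2 + b ^+ 2 + c ^+ 2 + d ^+ 2).
Definition conj3 (w : T) : T :=
  let: Complex z1 z2 := w in Complex (conjc z1) (- conjc z2).
(* idempotent components: w = idemp1 w e1 + idemp2 w e2, with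
   idemp1 w = z1 - z2 i1, idemp2 w = z1 + z2 i1 *)
Definition idemp1 (w : T) : C := let: Complex z1 z2 := w in z1 - z2 * Complex 0 1.
Definition idemp2 (w : T) : C := let: Complex z1 z2 := w in z1 + z2 * Complex 0 1.
(* square root on D^+: (a e1 + b e2)^(1/2) = sqrt a e1 + sqrt b e2 *)
Definition sqrtD (w : T) : T :=
  realT (Num.sqrt (complex.Re (idemp1 w))) * be1 +
  realT (Num.sqrt (complex.Re (idemp2 w))) * be2.
End Bicomplex.

Section Module.
Variable R : rcfType.
Local Notation T := (bicomplex R).
Variable M : lmodType T.

Definition is_Tbasis (n : nat) (m : 'I_n -> M) : Prop :=
  (forall X : M, exists x : 'I_n -> T, X = \sum_(l < n) x l *: m l) /\
  (forall x : 'I_n -> T, \sum_(l < n) x l *: m l = 0 -> forall l, x l = 0).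

Definition inV (n : nat) (m : 'I_n -> M) (X : M) : Prop :=
  exists x : 'I_n -> complex R, X = \sum_(l < n) inC1 (x l) *: m l.

Definition bicomplex_scalar_product (sp : M -> M -> T) : Prop :=
  [/\ forall X Y1 Y2, sp X (Y1 + Y2) = sp X Y1 + sp X Y2,
      forall X Y (a : T), sp X (a *: Y) = a * sp X Y,
      forall X Y, sp X Y = conj3 (sp Y X) &
      forall X, sp X X = 0 <-> X = 0].

Definition hyperbolic_positive (sp : M -> M -> T) : Prop :=
  forall X, inDplus (sp X X).

Definition closed_on_V (n : nat) (m : 'I_n -> M) (sp : M -> M -> T) : Prop :=
  forall X Y, inV m X -> inV m Y -> exists z : complex R, sp X Y = inC1 z.

Definition normM (sp : M -> M -> T) (X : M) : R := normT (sqrtD (sp X X)).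

Definition distM (sp : M -> M -> T) (X Y : M) : R := normM sp (X - Y).

Definition is_metric (d : M -> M -> R) : Prop :=
  [/\ forall X Y, 0 <= d X Y,
      forall X Y, d X Y = 0 <-> X = Y,
      forall X Y, d X Y = d Y X &
      forall X Y Z, d X Z <= d X Y + d Y Z].
End Module.

(* Main.v *)
Require Import Defs.
From HB Require Import structures.
From mathcomp Require Import all_boot all_order all_algebra.
From mathcomp Require Import complex.
From mathcomp Require Import ring lra.
Import Order.TTheory GRing.Theory Num.Theory.
Local Open Scope ring_scope.

Section G.
Variable K : fieldType.
Implicit Types x y : complex K.
Lemma ReM x y : complex.Re (x * y) = complex.Re x * complex.Re y - complex.Im x * complex.Im y. Proof. by case: x; case: y. Qed.
Lemma ImM x y : complex.Im (x * y) = complex.Re x * complex.Im y + complex.Im x * complex.Re y. Proof. by case: x; case: y. Qed.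
Lemma ReD x y : complex.Re (x + y) = complex.Re x + complex.Re y. Proof. by case: x; case: y. Qed.
Lemma ImD x y : complex.Im (x + y) = complex.Im x + complex.Im y. Proof. by case: x; case: y. Qed.
Lemma ReN x : complex.Re (- x) = - complex.Re x. Proof. by case: x. Qed.
Lemma ImN x : complex.Im (- x) = - complex.Im x. Proof. by case: x. Qed.
Lemma ReB x y : complex.Re (x - y) = complex.Re x - complex.Re y. Proof. by case: x; case: y. Qed.
Lemma ImB x y : complex.Im (x - y) = complex.Im x - complex.Im y. Proof. by case: x; case: y. Qed.
Lemma Re0 : complex.Re (0 : complex K) = 0. Proof. by []. Qed.
Lemma Im0 : complex.Im (0 : complex K) = 0. Proof. by []. Qed.
Lemma Re1 : complex.Re (1 : complex K) = 1. Proof. by []. Qed.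
Lemma Im1 : complex.Im (1 : complex K) = 0. Proof. by []. Qed.
Lemma ReC a b : complex.Re (Complex a b : complex K) = a. Proof. by []. Qed.
Lemma ImC a b : complex.Im (Complex a b : complex K) = b. Proof. by []. Qed.
Lemma ReJ x : complex.Re (conjc x) = complex.Re x. Proof. by case: x. Qed.
Lemma ImJ x : complex.Im (conjc x) = - complex.Im x. Proof. by case: x. Qed.
End G.

Section T.
Variable R : rcfType.
Local Notation C := (complex R).
Local Notation T := (bicomplex R).
Local Notation RR w := (complex.Re (complex.Re w)).
Local Notation IR w := (complex.Im (complex.Re w)).
Local Notation RI w := (complex.Re (complex.Im w)).
Local Notation II w := (complex.Im (complex.Im w)).

Lemma conj3E (w : T) : conj3 w = Complex (conjc (complex.Re w)) (- conjc (complex.Im w)).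
Proof. by case: w. Qed.
Lemma idemp1E (w : T) : idemp1 w = complex.Re w - complex.Im w * Complex 0 1.
Proof. by case: w. Qed.
Lemma idemp2E (w : T) : idemp2 w = complex.Re w + complex.Im w * Complex 0 1.
Proof. by case: w. Qed.
Lemma normTE (w : T) : normT w = Num.sqrt (RR w ^+ 2 + IR w ^+ 2 + RI w ^+ 2 + II w ^+ 2).
Proof. by case: w => [[a b] [c d]]. Qed.

Lemma RRM (x y : T) : RR (x * y) = RR x * RR y - IR x * IR y - (RI x * RI y - II x * II y).
Proof. by case: x => [[a b] [c d]]; case: y => [[a' b'] [c' d']]. Qed.
Lemma IRM (x y : T) : IR (x * y) = RR x * IR y + IR x * RR y - (RI x * II y + II x * RI y).
Proof. by case: x => [[a b] [c d]]; case: y => [[a' b'] [c' d']]. Qed.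
Lemma RIM (x y : T) : RI (x * y) = RR x * RI y - IR x * II y + (RI x * RR y - II x * IR y).
Proof. by case: x => [[a b] [c d]]; case: y => [[a' b'] [c' d']]. Qed.
Lemma IIM (x y : T) : II (x * y) = RR x * II y + IR x * RI y + (RI x * IR y + II x * RR y).
Proof. by case: x => [[a b] [c d]]; case: y => [[a' b'] [c' d']]. Qed.
Lemma RRD (x y : T) : RR (x + y) = RR x + RR y. Proof. by case: x => [[a b] [c d]]; case: y => [[a' b'] [c' d']]. Qed.
Lemma IRD (x y : T) : IR (x + y) = IR x + IR y. Proof. by case: x => [[a b] [c d]]; case: y => [[a' b'] [c' d']]. Qed.
Lemma RID (x y : T) : RI (x + y) = RI x + RI y. Proof. by case: x => [[a b] [c d]]; case: y => [[a' b'] [c' d']]. Qed.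
Lemma IID (x y : T) : II (x + y) = II x + II y. Proof. by case: x => [[a b] [c d]]; case: y => [[a' b'] [c' d']]. Qed.
Lemma RRN (x : T) : RR (- x) = - RR x. Proof. by case: x => [[a b] [c d]]. Qed.
Lemma IRN (x : T) : IR (- x) = - IR x. Proof. by case: x => [[a b] [c d]]. Qed.
Lemma RIN (x : T) : RI (- x) = - RI x. Proof. by case: x => [[a b] [c d]]. Qed.
Lemma IIN (x : T) : II (- x) = - II x. Proof. by case: x => [[a b] [c d]]. Qed.
Lemma RRJ (x : T) : RR (conj3 x) = RR x. Proof. by case: x => [[a b] [c d]]. Qed.
Lemma IRJ (x : T) : IR (conj3 x) = - IR x. Proof. by case: x => [[a b] [c d]]. Qed.
Lemma RIJ (x : T) : RI (conj3 x) = - RI x. Proof. by case: x => [[a b] [c d]]. Qed.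
Lemma IIJ (x : T) : II (conj3 x) = II x. Proof. by case: x => [[a b] [c d]] /=; rewrite opprK. Qed.
Lemma RR0 : RR (0 : T) = 0. Proof. by []. Qed.
Lemma IR0 : IR (0 : T) = 0. Proof. by []. Qed.
Lemma RI0 : RI (0 : T) = 0. Proof. by []. Qed.
Lemma II0 : II (0 : T) = 0. Proof. by []. Qed.
Lemma RR1 : RR (1 : T) = 1. Proof. by []. Qed.
Lemma IR1 : IR (1 : T) = 0. Proof. by []. Qed.
Lemma RI1 : RI (1 : T) = 0. Proof. by []. Qed.
Lemma II1 : II (1 : T) = 0. Proof. by []. Qed.
Lemma RRr a : RR (realT (R:=R) a) = a. Proof. by []. Qed.
Lemma IRr a : IR (realT (R:=R) a) = 0. Proof. by []. Qed.
Lemma RIr a : RI (realT (R:=R) a) = 0. Proof. by []. Qed.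
Lemma IIr a : II (realT (R:=R) a) = 0. Proof. by []. Qed.
Lemma RRc a b c d : RR (Complex (Complex a b) (Complex c d) : T) = a. Proof. by []. Qed.
Lemma IRc a b c d : IR (Complex (Complex a b) (Complex c d) : T) = b. Proof. by []. Qed.
Lemma RIc a b c d : RI (Complex (Complex a b) (Complex c d) : T) = c. Proof. by []. Qed.
Lemma IIc a b c d : II (Complex (Complex a b) (Complex c d) : T) = d. Proof. by []. Qed.
Lemma eqT (x y : T) : RR x = RR y -> IR x = IR y -> RI x = RI y -> II x = II y -> x = y.
Proof. by case: x => [[a b] [c d]]; case: y => [[a' b'] [c' d']] /= -> -> -> ->. Qed.
Lemma bjE : bj R = Complex (Complex 0 0) (Complex 0 1).
Proof. rewrite /bj /bi1 /bi2; apply: eqT; rewrite ?(RRM, IRM, RIM, IIM) /=; ring. Qed.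

Ltac simpT := rewrite ?(RRM, IRM, RIM, IIM, RRD, IRD, RID, IID, RRN, IRN, RIN, IIN, RRJ, IRJ, RIJ, IIJ,
   RRr, IRr, RIr, IIr);
  rewrite ?(mul0r, mulr0, add0r, addr0, subr0, sub0r, mul1r, mulr1, opprK, oppr0).

Lemma be1E : [/\ RR (be1 R) = 2%:R^-1, IR (be1 R) = 0, RI (be1 R) = 0 & II (be1 R) = 2%:R^-1].
Proof. rewrite /be1 bjE; split; simpT; rewrite ?(RR1, IR1, RI1, II1) /=; simpT; ring. Qed.
Lemma be2E : [/\ RR (be2 R) = 2%:R^-1, IR (be2 R) = 0, RI (be2 R) = 0 & II (be2 R) = - 2%:R^-1].
Proof. rewrite /be2 bjE; split; simpT; rewrite ?(RR1, IR1, RI1, II1) /=; simpT; ring. Qed.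


Lemma Reidemp1 (w : T) : complex.Re (idemp1 w) = RR w + II w.
Proof. case: w => [[a b] [c d]] /=. ring. Qed.
Lemma Reidemp2 (w : T) : complex.Re (idemp2 w) = RR w - II w.
Proof. case: w => [[a b] [c d]] /=. ring. Qed.

Lemma Dplus_facts (w : T) : inDplus w -> exists a b : R,
  [/\ 0 <= a, 0 <= b, RR w = (a + b) / 2%:R, IR w = 0 /\ RI w = 0 & II w = (a - b) / 2%:R].
Proof.
case=> a [b [a0 [b0 ->]]]; exists a, b.
have := be1E; have := be2E; move: (be1 R) (be2 R) => E1 E2 [f1 f2 f3 f4] [e1 e2 e3 e4].
split; [exact a0|exact b0| | split | ]; simpT; rewrite ?(e1,e2,e3,e4,f1,f2,f3,f4); simpT; field; by [].
Qed.

Lemma normT_sqrtD (w : T) : inDplus w -> normT (sqrtD w) = Num.sqrt (RR w).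
Proof.
move=> /Dplus_facts [a [b [a0 b0 h1 [h2 h3] h4]]].
rewrite normTE; congr Num.sqrt.
rewrite /sqrtD; have := be1E; have := be2E; move: (be1 R) (be2 R) => E1 E2 [f1 f2 f3 f4] [e1 e2 e3 e4].
have ea : RR w + II w = a by rewrite h1 h4; field; by [].
have eb : RR w - II w = b by rewrite h1 h4; field; by [].
rewrite Reidemp1 Reidemp2 ea eb h1.
have Ha := sqr_sqrtr a0. have Hb := sqr_sqrtr b0.
simpT; rewrite ?(e1,e2,e3,e4,f1,f2,f3,f4); simpT.
move: (Num.sqrt a) (Num.sqrt b) Ha Hb => sa sb <- <-. field; by [].
Qed.

Lemma bi1E : [/\ RR (bi1 R) = 0, IR (bi1 R) = 1, RI (bi1 R) = 0 & II (bi1 R) = 0].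
Proof. by []. Qed.
Lemma bi2E : [/\ RR (bi2 R) = 0, IR (bi2 R) = 0, RI (bi2 R) = 1 & II (bi2 R) = 0].
Proof. by []. Qed.
Lemma conj3D (x y : T) : conj3 (x + y) = conj3 x + conj3 y.
Proof. apply: eqT; simpT; ring. Qed.
Lemma conj3M (x y : T) : conj3 (x * y) = conj3 x * conj3 y.
Proof. apply: eqT; simpT; ring. Qed.
Lemma eqT0 (x : T) : RR x = 0 -> IR x = 0 -> RI x = 0 -> II x = 0 -> x = 0.
Proof. by case: x => [[a b] [c d]] /= -> -> -> ->. Qed.
Lemma CS (A B C : R) : 0 <= A -> 0 <= C ->
  (forall r, 0 <= A + r * B + r * B + r * r * C) -> B ^+ 2 <= A * C.
Proof.
move=> A0 C0 H.
have [C0'|Cp] := eqVneq C 0.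
  rewrite C0' mulr0.
  have [B0|Bn] := eqVneq B 0; first by rewrite B0 expr0n.
  set r := - (A + 1) / (2%:R * B).
  have := H r.
  have -> : A + r * B + r * B + r * r * C = -1.
    rewrite C0' /r; field. by rewrite Bn.
  by rewrite ler0N1.
have Cpos : 0 < C by rewrite lt_neqAle eq_sym Cp C0.
set t := B / C.
have tC : t * C = B by rewrite /t mulfVK.
have := H (- t).
nra.
Qed.
End T.

Ltac simpT := rewrite ?(RRM, IRM, RIM, IIM, RRD, IRD, RID, IID, RRN, IRN, RIN, IIN, RRJ, IRJ, RIJ, IIJ,
   RRr, IRr, RIr, IIr);
  rewrite ?(mul0r, mulr0, add0r, addr0, subr0, sub0r, mul1r, mulr1, opprK, oppr0).

Section Mod.
Variable R : rcfType.
Local Notation T := (bicomplex R).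
Local Notation RR w := (complex.Re (complex.Re w)).
Local Notation IR w := (complex.Im (complex.Re w)).
Local Notation RI w := (complex.Re (complex.Im w)).
Local Notation II w := (complex.Im (complex.Im w)).
Variable M : lmodType T.
Variable sp : M -> M -> T.
Hypothesis hsp : bicomplex_scalar_product sp.
Hypothesis hpos : hyperbolic_positive sp.

Lemma spD2 X Y1 Y2 : sp X (Y1 + Y2) = sp X Y1 + sp X Y2.
Proof. by case: hsp. Qed.
Lemma spZ2 X Y a : sp X (a *: Y) = a * sp X Y.
Proof. by case: hsp. Qed.
Lemma spH X Y : sp X Y = conj3 (sp Y X).
Proof. by case: hsp. Qed.
Lemma spD1 X1 X2 Y : sp (X1 + X2) Y = conj3 (sp Y X1) + conj3 (sp Y X2).
Proof. by rewrite spH spD2 conj3D. Qed.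
Lemma spZ1 X Y a : sp (a *: X) Y = conj3 a * conj3 (sp Y X).
Proof. by rewrite spH spZ2 conj3M. Qed.

Definition Q X := RR (sp X X).

Lemma normME X : normM sp X = Num.sqrt (Q X).
Proof. by apply: normT_sqrtD; apply: hpos. Qed.

Lemma Q_facts X : [/\ 0 <= Q X, IR (sp X X) = 0, RI (sp X X) = 0 & 
   (II (sp X X) <= Q X /\ - II (sp X X) <= Q X)].
Proof.
have [a [b [a0 b0 h1 [h2 h3] h4]]] := @Dplus_facts R _ (hpos X).
rewrite /Q h1 h2 h3 h4; split => //.
- apply: divr_ge0; [exact: addr_ge0|by rewrite ler0n].
- split; rewrite -subr_ge0.
  + have -> : (a + b) / 2%:R - (a - b) / 2%:R = b by field.
    exact b0.
  + have -> : (a + b) / 2%:R - - ((a - b) / 2%:R) = a by field.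
    exact a0.
Qed.

Lemma QZ (a : T) X : Q (a *: X) =
  (RR a ^+ 2 + IR a ^+ 2 + RI a ^+ 2 + II a ^+ 2) * Q X
  + 2%:R * (RR a * II a - IR a * RI a) * II (sp X X).
Proof.
rewrite /Q spZ2 spZ1.
have [_ h2 h3 _] := Q_facts X.
move: (sp X X) h2 h3 => w h2 h3.
simpT. rewrite h2 h3. ring.
Qed.

Lemma Ci_facts (a : T) : inCi1 a \/ inCi2 a -> RR a * II a - IR a * RI a = 0.
Proof.
have := bi1E R; have := bi2E R; move: (bi1 R) (bi2 R) => B1 B2 [f1 f2 f3 f4] [e1 e2 e3 e4].
case=> [[x [y ->]]|[x [y ->]]]; simpT; rewrite ?(e1,e2,e3,e4,f1,f2,f3,f4); simpT; ring.
Qed.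

Lemma sq_nonneg4 (a : T) : 0 <= RR a ^+ 2 + IR a ^+ 2 + RI a ^+ 2 + II a ^+ 2.
Proof. by rewrite !addr_ge0 ?sqr_ge0. Qed.

Lemma item3 (a : T) X : inCi1 a \/ inCi2 a -> normM sp (a *: X) = normT a * normM sp X.
Proof.
move=> /Ci_facts h.
rewrite !normME QZ h mulr0 mul0r addr0 normTE sqrtrM //; exact: sq_nonneg4.
Qed.

Lemma item4 (a : T) X : normM sp (a *: X) <= Num.sqrt 2%:R * normT a * normM sp X.
Proof.
have [q0 _ _ [c1 c2]] := Q_facts X.
rewrite !normME QZ normTE -!sqrtrM ?ler0n ?sq_nonneg4 //; last first.
  by rewrite !mulr_ge0 ?ler0n ?sq_nonneg4.
apply: ler_wsqrtr.
move: (RR a) (IR a) (RI a) (II a) (II (sp X X)) (Q X) q0 c1 c2 => p q r s c4 c1 q0 h1 h2.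
have H1 : 0 <= (p ^+ 2 + q ^+ 2 + r ^+ 2 + s ^+ 2) - 2%:R * (p * s - q * r).
  have -> : (p ^+ 2 + q ^+ 2 + r ^+ 2 + s ^+ 2) - 2%:R * (p * s - q * r) = (p - s) ^+ 2 + (q + r) ^+ 2 by ring.
  by rewrite addr_ge0 ?sqr_ge0.
have H2 : 0 <= (p ^+ 2 + q ^+ 2 + r ^+ 2 + s ^+ 2) + 2%:R * (p * s - q * r).
  have -> : (p ^+ 2 + q ^+ 2 + r ^+ 2 + s ^+ 2) + 2%:R * (p * s - q * r) = (p + s) ^+ 2 + (q - r) ^+ 2 by ring.
  by rewrite addr_ge0 ?sqr_ge0.
have H3 : 0 <= c1 + c4 by lra.
have H4 : 0 <= c1 - c4 by lra.
have := mulr_ge0 H1 H3; have := mulr_ge0 H2 H4.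
nra.
Qed.

Lemma sp00 : sp 0 0 = 0.
Proof. by case: hsp => _ _ _ /(_ 0) [_ ->]. Qed.

Lemma item2 X : normM sp X = 0 <-> X = 0.
Proof.
split; last first.
  by move=> ->; rewrite normME /Q sp00 sqrtr0.
rewrite normME => /eqP; rewrite sqrtr_eq0 => hq.
have [a [b [a0 b0 h1 [h2 h3] h4]]] := @Dplus_facts R _ (hpos X).
have qe : Q X = 0.
  by apply/eqP; rewrite eq_le hq /=; have [] := Q_facts X.
move: qe; rewrite /Q h1 => qe.
have ab : a + b = 0.
  by move: qe => /eqP; rewrite mulf_eq0 invr_eq0 pnatr_eq0 orbF => /eqP.
have a00 : a = 0 by lra.
have b00 : b = 0 by lra.
case: hsp => _ _ _ /(_ X) [+ _]; apply.
apply: eqT0 => //; first by rewrite h1 a00 b00 add0r mul0r.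
by rewrite h4 a00 b00 subr0 mul0r.
Qed.

Lemma Qsum X Y : Q (X + Y) = Q X + RR (sp X Y) + RR (sp X Y) + Q Y.
Proof.
rewrite /Q !spD2 !spD1 [sp Y X]spH.
simpT. ring.
Qed.

Lemma QsumZ X Y r : Q (X + realT r *: Y) = Q X + r * RR (sp X Y) + r * RR (sp X Y) + r * r * Q Y.
Proof.
rewrite /Q !spD2 !spD1 !spZ2 !spZ1.
simpT. ring.
Qed.

Lemma item5 X Y : normM sp (X + Y) <= normM sp X + normM sp Y.
Proof.
have [qx _ _ _] := Q_facts X. have [qy _ _ _] := Q_facts Y.
have cs : RR (sp X Y) ^+ 2 <= Q X * Q Y.
  apply: CS => // r; rewrite -QsumZ; by have [] := Q_facts (X + realT r *: Y).
rewrite !normME Qsum.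
have hx := sqr_sqrtr qx. have hy := sqr_sqrtr qy.
have sx0 := sqrtr_ge0 (Q X). have sy0 := sqrtr_ge0 (Q Y).
rewrite -(ger0_norm (addr_ge0 sx0 sy0)) -sqrtr_sqr.
apply: ler_wsqrtr.
move: (Num.sqrt (Q X)) (Num.sqrt (Q Y)) hx hy sx0 sy0 cs => sx sy <- <- sx0 sy0 cs.
move: (RR (sp X Y)) cs => b cs.
have : b <= sx * sy.
  have p0 : 0 <= sx * sy by rewrite mulr_ge0.
  have : b ^+ 2 <= (sx * sy) ^+ 2 by rewrite exprMn.
  nra.
nra.
Qed.

Lemma normMN X : normM sp (- X) = normM sp X.
Proof.
rewrite -scaleN1r !normME QZ.
have -> : (-1 : T) = - 1 by [].
rewrite ?(RRN, IRN, RIN, IIN).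
rewrite (_ : RR (1 : T) = 1) // (_ : IR (1 : T) = 0) // (_ : RI (1 : T) = 0) // (_ : II (1 : T) = 0) //.
congr Num.sqrt. ring.
Qed.

Lemma main_sec : (forall X Y : M,
    [/\ 0 <= normM sp X,
        normM sp X = 0 <-> X = 0,
        (forall alpha : bicomplex R, inCi1 alpha \/ inCi2 alpha ->
           normM sp (alpha *: X) = normT alpha * normM sp X),
        (forall alpha : bicomplex R,
           normM sp (alpha *: X) <= Num.sqrt 2%:R * normT alpha * normM sp X) &
        normM sp (X + Y) <= normM sp X + normM sp Y]) /\
  is_metric (distM sp).
Proof.
split.
  move=> X Y; split.
  - by rewrite normME sqrtr_ge0.
  - exact: item2.
  - by move=> a; apply: item3.
  - by move=> a; apply: item4.
  - exact: item5.
split; rewrite /distM.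
- by move=> X Y; rewrite normME sqrtr_ge0.
- move=> X Y; rewrite item2; split; last by move=> ->; exact: subrr.
  by move=> /eqP; rewrite subr_eq0 => /eqP.
- by move=> X Y; rewrite -normMN opprB.
- move=> X Y Z; have -> : X - Z = (X - Y) + (Y - Z) by rewrite addrA subrK.
  exact: item5.
Qed.
End Mod.

Theorem mainTheorem10 (R : rcfType) (M : lmodType (bicomplex R))
  (n : nat) (m : 'I_n -> M) (sp : M -> M -> bicomplex R) :
  is_Tbasis m ->
  bicomplex_scalar_product sp ->
  hyperbolic_positive sp ->
  closed_on_V m sp ->
  (forall X Y : M,
    [/\ 0 <= normM sp X,
        normM sp X = 0 <-> X = 0,
        (forall alpha : bicomplex R, inCi1 alpha \/ inCi2 alpha ->
           normM sp (alpha *: X) = normT alpha * normM sp X),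
        (forall alpha : bicomplex R,
           normM sp (alpha *: X) <= Num.sqrt 2%:R * normT alpha * normM sp X) &
        normM sp (X + Y) <= normM sp X + normM sp Y]) /\
  is_metric (distM sp).
Proof.
move=> _ hsp hpos _.
exact: (@main_sec R M sp hsp hpos).
Qed.
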